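(* Let $G$ be a finite group of order $v=mn$ and $H\le G$ a subgroup of order $n$. Suppose $S'$ is a family of subsets of $G$ which partitions $G\setminus H$ and is both a $(v,s,k,\lambda_1,\mu_1)$-DPDF and a $(v,s,k,\lambda_2,\mu_2)$-EPDF in $G$. Then (i) $n\mid\mu_1$ and $n\mid\mu_2$; (ii) if $\gcd(mn-n,mn-1)=1$, then either (a) $S'$ is an $(mn,s,k,k-1,0)$-DPDF and an $(mn,s,k,mn-2n-k+1,mn-n)$-EPDF, or (b) $S'$ is an $(mn,s,k,k-n,mn-n)$-DPDF and an $(mn,s,k,mn-n-k,0)$-EPDF; (iii) if $n=2$, then either (a) $S'$ is a $(2m,s,k,k-1,0)$-DPDF and a $(2m,s,k,2m-3-k,2m-2)$-EPDF, or (b) $S'$ is a $(2m,s,k,k-2,2m-2)$-DPDF and a $(2m,s,k,2m-2-k,0)$-EPDF.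
   Context: Groups are written multiplicatively with identity $e$; $G^*=G\setminus\{e\}$. For $D\subseteq G$, $\Delta(D)$ is the multiset $\{xy^{-1}: x,y\in D, x\ne y\}$; for $D_1,D_2\subseteq G$, $\Delta(D_1,D_2)$ is the multiset $\{xy^{-1}:x\in D_1,y\in D_2\}$. For a family $A=\{A_1,\dots,A_s\}$ of pairwise disjoint subsets, ${\rm Int}(A)=\bigcup_i\Delta(A_i)$ and ${\rm Ext}(A)=\bigcup_{i\ne j}\Delta(A_i,A_j)$ (multiset unions). For $|G|=v$, a $(v,s,k,\lambda,\mu)$-DPDF is a family of $s$ pairwise disjoint $k$-subsets of $G^*$ with union $S$ such that ${\rm Int}(A)$ contains each element of $S$ exactly $\lambda$ times and each element of $G\setminus(S\cup\{e\})$ exactly $\mu$ times; a $(v,s,k,\lambda,\mu)$-EPDF is defined the same way using ${\rm Ext}(A)$. A family partitions a set $X$ if its members are pairwise disjoint with union $X$. *)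

(* Defs.v *)
From mathcomp Require Import all_boot all_order all_algebra all_fingroup.
Set Implicit Arguments. Unset Strict Implicit. Unset Printing Implicit Defensive.
Import GRing.Theory Num.Theory.
Open Scope int_scope.

Section PDF.
Variable gT : finGroupType.

Definition union_fam (s : nat) (A : 'I_s -> {set gT}) : {set gT} :=
  \bigcup_(i < s) A i.

Definition pairwise_disj (s : nat) (A : 'I_s -> {set gT}) : Prop :=
  forall i j : 'I_s, i != j -> [disjoint A i & A j].

(* multiplicity of x in Int(A) = union of Delta(A_i) *)
Definition int_mult (s : nat) (A : 'I_s -> {set gT}) (x : gT) : nat :=
  \sum_(i < s) #|[set p : gT * gT | [&& p.1 \in A i, p.2 \in A i,
                                      p.1 != p.2 & (p.1 * p.2^-1)%g == x]]|.

(* multiplicity of x in Ext(A) = union over i != j of Delta(A_i, A_j) *)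
Definition ext_mult (s : nat) (A : 'I_s -> {set gT}) (x : gT) : nat :=
  \sum_(i < s) \sum_(j < s | j != i)
     #|[set p : gT * gT | [&& p.1 \in A i, p.2 \in A j
                             & (p.1 * p.2^-1)%g == x]]|.

Definition pdf_base (v s k : nat) (A : 'I_s -> {set gT}) : Prop :=
  [/\ #|gT| = v, forall i, #|A i| = k, forall i, (1%g \notin A i)
    & pairwise_disj A].

Definition is_DPDF (v s k : nat) (lam mu : int) (A : 'I_s -> {set gT}) : Prop :=
  pdf_base v k A /\
  (forall x : gT, x \in union_fam A -> Posz (int_mult A x) = lam) /\
  (forall x : gT, x \notin union_fam A -> x != 1%g -> Posz (int_mult A x) = mu).

Definition is_EPDF (v s k : nat) (lam mu : int) (A : 'I_s -> {set gT}) : Prop :=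
  pdf_base v k A /\
  (forall x : gT, x \in union_fam A -> Posz (ext_mult A x) = lam) /\
  (forall x : gT, x \notin union_fam A -> x != 1%g -> Posz (ext_mult A x) = mu).

Definition partitions (s : nat) (A : 'I_s -> {set gT}) (X : {set gT}) : Prop :=
  pairwise_disj A /\ union_fam A = X.

End PDF.

(* Main.v *)
Require Import Defs.
From mathcomp Require Import all_boot all_order all_algebra all_fingroup zify.
Import GRing.Theory Num.Theory.
Set Implicit Arguments. Unset Strict Implicit. Unset Printing Implicit Defensive.

Section H.
Variable gT : finGroupType.
Local Open Scope nat_scope.

Lemma card_setE (T : finType) (P : pred T) : #|[set p | P p]| = \sum_p P p.
Proof. by rewrite -sum1_card big_mkcond; apply: eq_bigr => p _; rewrite inE; case: (P p). Qed.

Lemma card_sum (T : finType) (B : {set T}) : #|B| = \sum_p (p \in B).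
Proof. by rewrite -sum1_card big_mkcond; apply: eq_bigr => p _; case: (p \in B). Qed.

Lemma ind_union s (A : 'I_s -> {set gT}) y : pairwise_disj A ->
  ((y \in union_fam A) : nat) = \sum_i (y \in A i).
Proof.
move=> hd; case: (boolP (y \in union_fam A)) => hy.
  have [i _ hi] := bigcupP hy.
  rewrite (bigD1 i) //= hi big1 // => j hj.
  have := hd j i hj => /disjointFl/(_ hi).
  by move=> ->.
rewrite big1 // => i _; case: (boolP (y \in A i)) => // hi.
by case/negP: hy; apply/bigcupP; exists i.
Qed.

Lemma card_union s (A : 'I_s -> {set gT}) : pairwise_disj A ->
  #|union_fam A| = \sum_i #|A i|.
Proof.
move=> hd; rewrite card_sum (eq_bigr _ (fun y _ => ind_union y hd)).
rewrite exchange_big /=; apply: eq_bigr => i _; by rewrite card_sum.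
Qed.

Lemma int_mult1 s (A : 'I_s -> {set gT}) : int_mult A 1%g = 0.
Proof.
rewrite /int_mult big1 // => i _; apply/eqP; rewrite cards_eq0; apply/eqP.
apply/setP => p; rewrite !inE; apply/negbTE.
by rewrite -eq_mulgV1; case: (p.1 == p.2); rewrite ?andbF.
Qed.

Lemma sum_int_mult s (A : 'I_s -> {set gT}) :
  \sum_x int_mult A x = \sum_i #|A i| * (#|A i|).-1.
Proof.
rewrite /int_mult exchange_big /=; apply: eq_bigr => i _.
under eq_bigr do rewrite card_setE.
rewrite exchange_big /=.
transitivity (\sum_(p : gT * gT) [&& p.1 \in A i, p.2 \in A i & p.1 != p.2] : nat).
  apply: eq_bigr => p _.
  rewrite (bigD1 (p.1 * p.2^-1)%g) //= eqxx andbT big1 ?addn0 // => y hy.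
  rewrite eq_sym in hy; by rewrite (negbTE hy) !andbF.
rewrite -(pair_big xpredT xpredT (fun a b => [&& a \in A i, b \in A i & a != b] : nat)) /=.
rewrite (card_sum (A i)) bigop.big_distrl /=; apply: eq_bigr => a _.
case: (boolP (a \in A i)) => ha /=; last by rewrite big1.
rewrite mul1n -card_sum (cardsD1 a) ha add1n /= card_sum.
by apply: eq_bigr => b _; rewrite in_setD1 eq_sym andbC.
Qed.


Lemma tot_mult s (A : 'I_s -> {set gT}) x : x != 1%g -> pairwise_disj A ->
  int_mult A x + ext_mult A x =
  #|[set p : gT * gT | [&& p.1 \in union_fam A, p.2 \in union_fam A
                         & (p.1 * p.2^-1)%g == x]]|.
Proof.
move=> hx hd.
have E: forall p : gT * gT, (p.1 * p.2^-1 == x)%g -> p.1 != p.2.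
  by move=> p /eqP e; rewrite eq_mulgV1 e.
rewrite /int_mult /ext_mult -big_split /=.
transitivity (\sum_(i < s) \sum_(j < s) #|[set p : gT * gT | [&& p.1 \in A i, p.2 \in A j
                         & (p.1 * p.2^-1)%g == x]]|).
  apply: eq_bigr => i _; rewrite [in RHS](bigD1 i) //=; congr (_ + _).
  apply: eq_card => p; rewrite !inE.
  by case e: (_ == x); [rewrite (E _ e) | rewrite !andbF].
under eq_bigr do under eq_bigr do rewrite card_setE.
under eq_bigr do rewrite exchange_big /=.
rewrite card_setE exchange_big /=.
apply: eq_bigr => p _.
rewrite -[in RHS]mulnb -[in RHS]mulnb (ind_union _ hd) (ind_union _ hd).
rewrite [in RHS]bigop.big_distrl /=.
apply: eq_bigr => i _; rewrite bigop.big_distrl /= bigop.big_distrr /=.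
by apply: eq_bigr => j _; rewrite !mulnb.
Qed.


Lemma ratio_eq (a b x : gT) : ((a * b^-1)%g == x) = (a == (x * b)%g).
Proof.
apply/eqP/eqP => [<-|->]; first by rewrite mulgKV.
by rewrite mulgK.
Qed.

Lemma pairs_count (S : {set gT}) x :
  #|[set p : gT * gT | [&& p.1 \in S, p.2 \in S & (p.1 * p.2^-1)%g == x]]| =
  #|[set b | (b \in S) && ((x * b)%g \in S)]|.
Proof.
rewrite !card_setE -(pair_big xpredT xpredT (fun a b =>
   [&& a \in S, b \in S & (a * b^-1)%g == x] : nat)) /=.
rewrite exchange_big /=; apply: eq_bigr => b _.
rewrite (bigD1 (x * b)%g) //= ratio_eq eqxx andbT big1 ?addn0.
  by rewrite andbC.
by move=> a ha; rewrite ratio_eq (negbTE ha) !andbF.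
Qed.

Lemma countH (H : {group gT}) x : x \in H ->
  #|[set b | (b \in ~: H) && ((x * b)%g \in ~: H)]| + #|H| = #|gT|.
Proof.
move=> hx; rewrite -(cardsC H) addnC; congr (_ + _); apply: eq_card => b.
by rewrite !inE groupMl // andbb.
Qed.

Lemma countS (H : {group gT}) x : x \notin H ->
  #|[set b | (b \in ~: H) && ((x * b)%g \in ~: H)]| + 2 * #|H| = #|gT|.
Proof.
move=> hx.
set B2 := [set b | (x * b)%g \in H].
have cB2 : #|B2| = #|H|.
  rewrite -[RHS](card_imset _ (mulgI (x^-1)%g)); apply: eq_card => b.
  rewrite /B2 inE; apply/idP/imsetP => [hb|[h hh ->]].
    by exists (x * b)%g => //; rewrite mulKg.
  by rewrite mulKVg.
have dis : H :&: B2 = set0.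
  apply/setP => b; rewrite !inE; apply/negbTE; apply/andP => [[hb hxb]].
  by case/negP: hx; rewrite -(groupMr x hb).
have -> : [set b | (b \in ~: H) && ((x * b)%g \in ~: H)] = ~: (H :|: B2).
  by apply/setP => b; rewrite !inE negb_or.
have := cardsC (H :|: B2); have := cardsUI H B2.
rewrite dis cards0 cB2 addn0 => e2 e1; rewrite -e1 addnC e2; congr (_ + _); by rewrite mul2n addnn.
Qed.

End H.
Unset Implicit Arguments.
Local Open Scope ring_scope.

Theorem mainTheorem11 (gT : finGroupType) (H : {group gT}) (m n s k : nat)
  (lam1 mu1 lam2 mu2 : int) (A : 'I_s -> {set gT}) :
  #|gT| = (m * n)%N -> #|H| = n ->
  partitions A (~: (H : {set gT})) ->
  is_DPDF (m * n) k lam1 mu1 A ->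
  is_EPDF (m * n) k lam2 mu2 A ->
  [/\ (n%:Z %| mu1)%Z /\ (n%:Z %| mu2)%Z,
      gcdn (m * n - n) (m * n - 1) = 1%N ->
        (is_DPDF (m * n) k (k%:Z - 1) 0 A /\
         is_EPDF (m * n) k ((m * n)%:Z - 2 * n%:Z - k%:Z + 1)
                           ((m * n)%:Z - n%:Z) A) \/
        (is_DPDF (m * n) k (k%:Z - n%:Z) ((m * n)%:Z - n%:Z) A /\
         is_EPDF (m * n) k ((m * n)%:Z - n%:Z - k%:Z) 0 A)
    & n = 2%N ->
        (is_DPDF (2 * m) k (k%:Z - 1) 0 A /\
         is_EPDF (2 * m) k (2 * m%:Z - 3 - k%:Z) (2 * m%:Z - 2) A) \/
        (is_DPDF (2 * m) k (k%:Z - 2) (2 * m%:Z - 2) A /\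
         is_EPDF (2 * m) k (2 * m%:Z - 2 - k%:Z) 0 A)].
Proof.
move=> hG hH [hdisj hU] [[_ hk h1 _] [hl1 hm1]] [_ [hl2 hm2]].
have hn0 : (0 < n)%N by rewrite -hH cardG_gt0.
have hcS : (#|~: (H : {set gT})| + n = m * n)%N by rewrite -hG -hH addnC cardsC.
set N := #|~: (H : {set gT})|.
have hcN : (N + n = m * n)%N by exact: hcS.
have inU : forall x, (x \in union_fam A) = (x \notin H) by move=> x; rewrite hU inE.
have tS : forall x, x \notin H -> (int_mult A x + ext_mult A x + 2 * n = m * n)%N.
  move=> x hx; have hx1 : x != 1%g by apply: contraNneq hx => ->; apply: group1.
  by rewrite tot_mult // hU pairs_count -hG -hH countS.
have tH : forall x, x \in H -> x != 1%g -> (int_mult A x + ext_mult A x + n = m * n)%N.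
  by move=> x hx hx1; rewrite tot_mult // hU pairs_count -hG -hH countH.
pose a := if [pick x in ~: (H : {set gT})] is Some x then int_mult A x else 0%N.
pose b := if [pick x in (H : {set gT}) :\ 1%g] is Some x then int_mult A x else 0%N.
have ha : forall x, x \notin H -> int_mult A x = a.
  move=> x hx; rewrite /a; case: pickP => [y hy|/(_ x)]; last by rewrite inE hx.
  have e1 := hl1 x; have e2 := hl1 y; rewrite !inU in e1 e2.
  rewrite inE in hy; have := e1 hx; rewrite -(e2 hy); by case.
have hb : forall x, x \in H -> x != 1%g -> int_mult A x = b.
  move=> x hx hx1; rewrite /b; case: pickP => [y hy|/(_ x)]; last by rewrite !inE hx hx1.
  rewrite !inE in hy; case/andP: hy => hy1 hy.
  have e1 := hm1 x; have e2 := hm1 y; rewrite !inU !negbK in e1 e2.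
  have := e1 hx hx1; rewrite -(e2 hy hy1); by case.
have hNsk : N = (s * k)%N.
  rewrite /N -hU card_union // (eq_bigr (fun _ => k)) //.
  by rewrite sum_nat_const card_ord.
have hD1 : #|(H : {set gT}) :\ 1%g| = (n - 1)%N.
  by rewrite -hH (cardsD1 1%g (H : {set gT})) group1 add1n subn1.
have heq : (N * a + (n - 1) * b = N * k.-1)%N.
  have e := sum_int_mult A.
  have -> : (N * k.-1 = s * (k * k.-1))%N by rewrite hNsk mulnA.
  have e' : (\sum_(i < s) #|A i| * (#|A i|).-1 = s * (k * k.-1))%N.
    rewrite (eq_bigr (fun _ => k * k.-1)%N) => [|i _]; last by rewrite hk.
    by rewrite sum_nat_const card_ord.
  rewrite -e' -e.
  transitivity (\sum_x ((x \in ~: (H : {set gT})) * a +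
                        (x \in (H : {set gT}) :\ 1%g) * b))%N.
    rewrite big_split /= -!bigop.big_distrl /= -!card_sum hD1 /N.
    done.
  apply: eq_bigr => x _; rewrite !inE.
  case: (boolP (x \in H)) => hx /=.
    case: (boolP (x == 1%g)) => hx1 /=.
      by rewrite (eqP hx1) int_mult1.
    by rewrite mul0n mul1n add0n hb.
  by rewrite andbF mul1n mul0n addn0 ha.
have bleN : (b <= N)%N.
  rewrite /b; case: pickP => // y; rewrite !inE => /andP [hy1 hy].
  have := tH y hy hy1; lia.
have hNn : N = (n * (m - 1))%N by rewrite mulnBr muln1 mulnC; lia.
have ndb : (n %| b)%N.
  have : (n %| (n - 1) * b)%N.
    have e : (n %| N * a + (n - 1) * b)%N by rewrite heq hNn -mulnA dvdn_mulr.
    rewrite hNn -mulnA in e.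
    by rewrite (dvdn_addr _ (dvdn_mulr ((m - 1) * a) (dvdnn n))) in e.
  move=> h; have [n' en] : exists n', n = n'.+1 by exists n.-1; rewrite prednK.
  by move: h; rewrite en subn1 /= Gauss_dvdr // coprimeSn.
have core : gcdn (m * n - n) (m * n - 1) = 1%N ->
   ((forall x, x \notin H -> int_mult A x + 1 = k) /\
    (forall x, x \in H -> x != 1%g -> int_mult A x = 0))%N \/
   ((forall x, x \notin H -> int_mult A x + n = k) /\
    (forall x, x \in H -> x != 1%g -> int_mult A x + n = m * n))%N.
  move=> hg.
  have hcop : coprime N (N + (n - 1)).
    have -> : (N + (n - 1) = m * n - 1)%N by lia.
    rewrite /coprime; have -> : N = (m * n - n)%N by lia.
    by rewrite hg.
  have dNb : (N %| b)%N.
    have e : (N %| N * a + (n - 1) * b)%N by rewrite heq dvdn_mulr.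
    rewrite (dvdn_addr _ (dvdn_mulr a (dvdnn N))) in e.
    by rewrite -(Gauss_dvdr _ hcop) mulnDl (dvdn_addr _ (dvdn_mulr b (dvdnn N))).
  have kpos : forall x, x \notin H -> (0 < k)%N.
    move=> x hx; rewrite -inU in hx; case/bigcupP: hx => i _ hi.
    by rewrite -(hk i) card_gt0; apply/set0Pn; exists x.
  have Npos : forall x, x \notin H -> (0 < N)%N.
    by move=> x hx; rewrite card_gt0; apply/set0Pn; exists x; rewrite inE.
  have [b0|bN] : b = 0%N \/ b = N.
    case/dvdnP: dNb => q hq; case: q hq => [|q] hq; first by left.
    by right; apply/eqP; rewrite eqn_leq bleN hq /= leq_pmull.
  - left; split; last by move=> x hx hx1; rewrite hb.
    move=> x hx; rewrite ha //; have := kpos x hx; have := Npos x hx.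
    rewrite b0 muln0 addn0 in heq => hN hk0.
    by move/eqP: heq; rewrite eqn_pmul2l // => /eqP ->; rewrite addn1 prednK.
  - right; split; last by move=> x hx hx1; rewrite hb // bN.
    move=> x hx; rewrite ha //; have := kpos x hx; have := Npos x hx.
    rewrite bN [((n - 1) * N)%N]mulnC -mulnDr in heq => hN hk0.
    by move/eqP: heq; rewrite eqn_pmul2l // => /eqP; lia.
split.
- case: (boolP (n == 1%N)) => [/eqP n1|n1].
    by rewrite n1; split; apply: dvd1z.
  have : (0 < #|(H : {set gT}) :\ 1%g|)%N by rewrite hD1; lia.
  rewrite card_gt0 => /set0Pn [y]; rewrite !inE => /andP [hy1 hy].
  have e1 := hm1 y; have e2 := hm2 y; rewrite !inU hy /= in e1 e2.
  rewrite -(e1 isT hy1) -(e2 isT hy1) hb //; split => //.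
  have -> : ext_mult A y = (N - b)%N by have := tH y hy hy1; rewrite hb //; lia.
  by apply: dvdn_sub => //; rewrite hNn dvdn_mulr.
- move=> hg; case: (core hg) => [[c1 c2]|[c1 c2]]; [left|right];
  (split; (split; [by split | split => x; rewrite inU => hx; [|move=> hx1]]));
  (try (have := c1 x hx; have := tS x hx; lia));
  (try (move/negbNE: hx => hx; have := c2 x hx hx1; have := tH x hx hx1; lia)).
- move=> n2.
  have hg : gcdn (m * n - n) (m * n - 1) = 1%N.
    have m0 : (0 < m)%N by rewrite n2 in hcS; lia.
    have -> : (m * n - 1 = (m * n - n) + 1)%N by rewrite n2; lia.
    by rewrite gcdnDl gcdn1.
  case: (core hg) => [[c1 c2]|[c1 c2]]; [left|right];
  (split; (split; [by split => //; rewrite hG n2 mulnC | split => x; rewrite inU => hx; [|move=> hx1]]));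
  (try (have := c1 x hx; have := tS x hx; rewrite n2; lia));
  (try (move/negbNE: hx => hx; have := c2 x hx hx1; have := tH x hx hx1; rewrite n2; lia)).
Qed.
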